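(* Let $f:\mathbb R^n\to\mathbb R$ be convex, differentiable and $L$-Lipschitz smooth, let $g:\mathbb R^n\to\mathbb R\cup\{+\infty\}$ be proper, closed and convex, and let $F=f+g$. Let $\epsilon\ge0$, $B\ge0$, $\rho\ge0$, $x\in\mathbb R^n$, and let $\tilde x$ satisfy $\mathbf 0\in\nabla f(x)-(B+\rho)(x-\tilde x)+\partial_\epsilon g(\tilde x)$ (i.e. $\tilde x\approx_\epsilon T_{B+\rho}(x)$) together with the line search condition $D_f(\tilde x,x)\le\frac B2\|x-\tilde x\|^2$. Then for all $z\in\mathbb R^n$, $$-\epsilon\le F(z)-F(\tilde x)+\frac{B+\rho}{2}\|x-z\|^2-\frac{B+\rho}{2}\|z-\tilde x\|^2-\frac\rho2\|\tilde x-x\|^2.$$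
   Context: $D_f(u,w):=f(u)-f(w)-\langle\nabla f(w),u-w\rangle$ (Bregman divergence). $f$ is $L$-Lipschitz smooth means $D_f(u,w)\le\frac L2\|u-w\|^2$ for all $u,w$. For proper $h$ and $\epsilon\ge0$, $\partial_\epsilon h(\bar x)=\{v:\langle v,u-\bar x\rangle\le h(u)-h(\bar x)+\epsilon\ \forall u\in\mathbb R^n\}$ if $\bar x\in\operatorname{dom}h$, and $\emptyset$ otherwise. *)

(* Defs.v *)
(* R : realType, R^n rendered as row vectors 'rV[R]_n. *)
From HB Require Import structures.
From mathcomp Require Import all_boot all_order all_algebra.
From mathcomp Require Import all_classical all_reals all_analysis.
Set Implicit Arguments. Unset Strict Implicit. Unset Printing Implicit Defensive.
Import Order.TTheory GRing.Theory Num.Theory.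
Import numFieldNormedType.Exports.
Local Open Scope ring_scope.

Section Defs.
Context {R : realType} {n : nat}.

Definition inner (u v : 'rV[R]_n) : R := \sum_(i < n) u 0 i * v 0 i.
Definition sqnorm (u : 'rV[R]_n) : R := inner u u.

Definition is_gradient (f : 'rV[R]_n -> R) (df : 'rV[R]_n -> 'rV[R]_n) : Prop :=
  forall w, differentiable f w /\ forall h, 'd f w h = inner (df w) h.

Definition convex_fun (f : 'rV[R]_n -> R) : Prop :=
  forall x y (t : R), 0 <= t <= 1 ->
    f (t *: x + (1 - t) *: y) <= t * f x + (1 - t) * f y.

Definition bregman (f : 'rV[R]_n -> R) (df : 'rV[R]_n -> 'rV[R]_n) (u w : 'rV[R]_n) : R :=
  f u - f w - inner (df w) (u - w).

Definition lipschitz_smooth (f : 'rV[R]_n -> R) (df : 'rV[R]_n -> 'rV[R]_n) (L : R) : Prop :=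
  forall u w, bregman f df u w <= L / 2 * sqnorm (u - w).

Definition proper_fun (g : 'rV[R]_n -> \bar R) : Prop :=
  (exists x, g x < +oo)%E /\ (forall x, -oo < g x)%E.

(* closed = lower semicontinuous *)
Definition closed_fun (g : 'rV[R]_n -> \bar R) : Prop :=
  forall x (a : R), (a%:E < g x)%E -> \forall y \near x, (a%:E < g y)%E.

Definition convex_efun (g : 'rV[R]_n -> \bar R) : Prop :=
  forall (x y : 'rV[R]_n) (t : R), 0 < t < 1 ->
    (g (t *: x + (1 - t) *: y)%R <= t%:E * g x + (1 - t)%:E * g y)%E.

Definition eps_subdiff (g : 'rV[R]_n -> \bar R) (eps : R) (xb : 'rV[R]_n) : set 'rV[R]_n :=
  [set v | (g xb < +oo)%E /\
     forall u, ((inner v (u - xb)%R)%:E <= g u - g xb + eps%:E)%E].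

End Defs.

(* Main.v *)
Require Import Defs.
From HB Require Import structures.
From mathcomp Require Import all_boot all_order all_algebra.
From mathcomp Require Import all_classical all_reals all_analysis.
From mathcomp Require Import ring lra.
Import Order.TTheory GRing.Theory Num.Theory.
Import numFieldNormedType.Exports.
Local Open Scope ring_scope.
Local Open Scope classical_set_scope.

Lemma grad_ineq (R : realType) (n : nat) (f : 'rV[R]_n -> R) df x z :
  convex_fun f -> is_gradient f df -> f x + inner (df x) (z - x) <= f z.
Proof.
move=> cf gf; have [dfx dfE] := gf x.
set d := z - x.
have dv : derivable f x d by apply: diff_derivable.
rewrite -dfE -deriveE //.
rewrite -lerBrDl.
pose q := fun h : R => h^-1 *: ((f \o shift x) (h *: d) - f x).
have cq : q h @[h --> 0^'] --> 'D_d f x by apply: dv.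
have cq' : q h @[h --> 0^'+] --> 'D_d f x.
  apply: cvg_trans cq => A [e e0 HA]; exists e => // y /= yx ypos.
  by apply: HA => //; rewrite gt_eqF.
apply: (cvgr_to_le cq').
near=> h.
have h0 : 0 < h by near: h; exact: nbhs_right_gt.
have h1 : h < 1 by near: h; exact: nbhs_right_lt.
rewrite /q /= ler_pdivrMl //.
have := cf z x h; rewrite (ltW h0) (ltW h1) => /(_ isT).
have -> : h *: z + (1 - h) *: x = h *: d + x.
  by rewrite /d scalerBr scalerBl scale1r addrCA addrC.
move=> H; rewrite /=; lra.
Unshelve. all: by end_near. Qed.
Lemma ident (R : realType) (n : nat) (v d x xt z : 'rV[R]_n) (B rho : R) :
  (forall i, v 0 i = (B + rho) * (x 0 i - xt 0 i) - d 0 i) ->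
  inner v (z - xt) + inner d (z - x) - inner d (xt - x) - B / 2 * sqnorm (x - xt)
  + ((B + rho) / 2 * sqnorm (x - z) - (B + rho) / 2 * sqnorm (z - xt)
         - rho / 2 * sqnorm (xt - x)) = 0.
Proof.
move=> hv; rewrite /sqnorm /inner !mulr_sumr -!sumrB -!big_split /=.
do ![rewrite -sumrB | rewrite -big_split].
apply: big1 => i _; rewrite !mxE hv /=.
by field.
Qed.
Theorem theorem2p15 (R : realType) (n : nat)
  (f : 'rV[R]_n -> R) (df : 'rV[R]_n -> 'rV[R]_n) (L : R)
  (g : 'rV[R]_n -> \bar R)
  (eps B rho : R) (x xt : 'rV[R]_n) :
  convex_fun f -> is_gradient f df -> lipschitz_smooth f df L ->
  proper_fun g -> closed_fun g -> convex_efun g ->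
  0 <= eps -> 0 <= B -> 0 <= rho ->
  (exists v, v \in eps_subdiff g eps xt /\
     0 = df x - (B + rho) *: (x - xt) + v) ->
  bregman f df xt x <= B / 2 * sqnorm (x - xt) ->
  forall z : 'rV[R]_n,
    ((- eps)%:E <=
      ((f z)%:E + g z) - ((f xt)%:E + g xt)
      + ((B + rho) / 2 * sqnorm (x - z) - (B + rho) / 2 * sqnorm (z - xt)
         - rho / 2 * sqnorm (xt - x))%:E)%E.
Proof.
move=> cf gf _ [_ gninf] _ _ e0 B0 r0 [v [/set_mem [gxt hsub] hv]] hbr z.
have hvi : forall i, v 0 i = (B + rho) * (x 0 i - xt 0 i) - df x 0 i.
  move=> i; have := congr1 (fun M : 'rV[R]_n => M 0 i) hv; rewrite !mxE /=.
  move=> H; lra.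
have hid := @ident _ _ v (df x) x xt z B rho hvi.
have hgr := @grad_ineq _ _ f df x z cf gf.
have := hsub z.
move: gxt (gninf xt); case: (g xt) => [s| |] // _ _.
move: (gninf z); case: (g z) => [r| |] // _.
- rewrite /=; rewrite -?EFinD -?EFinB ?lee_fin => H.
  move: hbr; rewrite /bregman => hb; lra.
- move=> _; rewrite addey// -EFinD.
exact: leey.
Qed.
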